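(* Let $a\in[-1,1)$. Let $M_3=\big(\int_{-1}^1t^{i+j}\,dt\big)_{0\le i,j\le3}$ and $v_a^{(3)}=\big(1-a,\ \tfrac{1-a^2}{2},\ \tfrac{1-a^3}{3},\ \tfrac{1-a^4}{4}\big)^\top$. Then the (unique) solution $z$ of $M_3z=v_a^{(3)}$ belongs to $(0,\infty)^4$ if and only if $\frac1{\sqrt5}<a<\frac{\sqrt{105}-5}{10}$. *)

(* Defs.v *)
From Stdlib Require Import Reals.
From Coquelicot Require Import Coquelicot.
From mathcomp Require Import all_boot all_algebra.
From mathcomp Require Import Rstruct.

Set Implicit Arguments. Unset Strict Implicit. Unset Printing Implicit Defensive.

Definition M3 : 'M[R]_4 :=
  \matrix_(i < 4, j < 4) RInt (fun t : R => pow t (i + j)) (Ropp R1) R1.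

Definition va3 (a : R) : 'cV[R]_4 :=
  \col_(k < 4) Rdiv (Rminus R1 (pow a k.+1)) (INR k.+1).

(* Main.v *)
Require Import Defs.
From Stdlib Require Import Reals.
From Coquelicot Require Import Coquelicot.
From mathcomp Require Import all_boot all_algebra.
From mathcomp Require Import Rstruct.

Lemma RInt_pow_aux (n : nat) :
  RInt (fun t => pow t n) (Ropp R1) R1 = Rdiv (Rminus R1 (pow (Ropp R1) (S n))) (INR (S n)).
Proof.
apply: is_RInt_unique.
have -> : Rdiv (Rminus R1 (pow (Ropp R1) (S n))) (INR (S n)) =
  Rminus (Rdiv (pow R1 (S n)) (INR (S n))) (Rdiv (pow (Ropp R1) (S n)) (INR (S n))).
  rewrite pow1. unfold Rdiv, Rminus. ring.
apply: (is_RInt_derive (fun t => Rdiv (pow t (S n)) (INR (S n)))).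
  move=> x _. auto_derive => //. 
  have hn : INR (S n) <> R0 by apply: not_0_INR.
  simpl. field. exact: hn.
move=> x _. apply: ex_derive_continuous. auto_derive => //.
Qed.

From mathcomp Require Import ring lra.
Import GRing.Theory Num.Theory.
Local Open Scope ring_scope.

Definition mval (n : nat) : R := if odd n then 0 else 2 / (n.+1)%:R.

Lemma RInt_pow n : RInt (fun t => pow t n) (Ropp R1) R1 = mval n.
Proof.
rewrite RInt_pow_aux !RealsE /mval exprS -signr_odd. change R1 with (1:R).
case: (odd n) => /=; rewrite ?expr0 ?expr1.
 rewrite mulrN1 opprK subrr mul0r //.
 rewrite mulr1 opprK. done.
Qed.

Lemma M3E : M3 = \matrix_(i < 4, j < 4) mval (i + j).
Proof. by apply/matrixP => i j; rewrite !mxE RInt_pow. Qed.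

Lemma sum4 (F : 'I_4 -> R) :
  \sum_(j < 4) F j = F (inord 0) + F (inord 1) + F (inord 2) + F (inord 3).
Proof.
rewrite !big_ord_recr big_ord0 /= add0r.
by congr (_ + _ + _ + _); congr F; apply: val_inj; rewrite /= inordK.
Qed.

Lemma eqs (a : R) (z : 'cV[R]_4) : M3 *m z = va3 a ->
  let z0 := z (inord 0) ord0 in let z1 := z (inord 1) ord0 in
  let z2 := z (inord 2) ord0 in let z3 := z (inord 3) ord0 in
  [/\ 2 * z0 + 2/3 * z2 = 1 - a, 2/3 * z1 + 2/5 * z3 = (1 - a^+2)/2,
      2/3 * z0 + 2/5 * z2 = (1 - a^+3)/3 & 2/5 * z1 + 2/7 * z3 = (1 - a^+4)/4].
Proof.
have va : va3 a = \col_(k < 4) ((1 - a^+k.+1) / (k.+1)%:R).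
  by apply/matrixP => i j; rewrite !mxE !RealsE; change R1 with (1:R).
rewrite M3E va => H.
have e : forall i, (\matrix_(i < 4, j < 4) mval (i + j) *m z) i ord0 = (\col_(k < 4) ((1 - a^+k.+1) / (k.+1)%:R)) i ord0 by move=> i; rewrite H.
move: (e (inord 0)) (e (inord 1)) (e (inord 2)) (e (inord 3)); rewrite !mxE !sum4 !mxE !inordK //= /mval /=.
rewrite !(addSn, add0n, addn0) expr1 =>  h0 h1 h2 h3.
split; lra.
Qed.

Definition ninv (i j : nat) : R :=
  match i, j with
  | 0, 0 => 9/8 | 0, 2 => -(15/8) | 2, 0 => -(15/8) | 2, 2 => 45/8
  | 1, 1 => 75/8 | 1, 3 => -(105/8) | 3, 1 => -(105/8) | 3, 3 => 175/8
  | _, _ => 0 end.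

Lemma M3_unit : M3 \in unitmx.
Proof.
apply: (proj1 (@mulmx1_unit _ _ M3 (\matrix_(i < 4, j < 4) ninv i j) _)).
rewrite M3E; apply/matrixP => i j; rewrite !mxE sum4 !mxE !inordK //.
case: i => [[|[|[|[|i]]]] Hi] //; case: j => [[|[|[|[|j]]]] Hj] //=;
  rewrite /mval /ninv /= ?(addSn, add0n, addn0) ?RealsE /=; lra.
Qed.

Lemma sqrt_facts (n : positive) : 0 < sqrt (IZR (Zpos n)) /\
  sqrt (IZR (Zpos n)) * sqrt (IZR (Zpos n)) = IZR (Zpos n).
Proof.
split.
  apply/RltP; apply: sqrt_lt_R0; exact: (IZR_lt 0).
rewrite -RmultE sqrt_sqrt //; exact: (IZR_le 0).
Qed.

Lemma key (a s r z0 z1 z2 z3 : R) : -1 <= a < 1 ->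
  0 < s -> s * s = 5 -> 0 < r -> r * r = 105 ->
  2 * z0 + 2/3 * z2 = 1 - a -> 2/3 * z1 + 2/5 * z3 = (1 - a^+2)/2 ->
  2/3 * z0 + 2/5 * z2 = (1 - a^+3)/3 -> 2/5 * z1 + 2/7 * z3 = (1 - a^+4)/4 ->
  ([/\ 0 < z0, 0 < z1, 0 < z2 & 0 < z3] <-> (1 / s < a < (r - 5) / 10)).
Proof.
move=> /andP[ha1 ha2] hs hs2 hr hr2 e0 e1 e2 e3.
have hz2 : z2 = 15/8 * (a - a^+3) by lra.
have hz0 : z0 = (4 - 9 * a + 5 * a^+3)/8 by lra.
have hz3 : z3 = 35/32 * ((1 - a^+2) * (5 * a^+2 - 1)).
  have -> : (1 - a^+2) * (5 * a^+2 - 1) = 6 * a^+2 - 5 * a^+4 - 1 by ring.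
  lra.
have hz1 : z1 = 15/32 * ((1 - a^+2) * (3 - 7 * a^+2)).
  have -> : (1 - a^+2) * (3 - 7 * a^+2) = 3 - 10 * a^+2 + 7 * a^+4 by ring.
  lra.
have e3a : a^+3 = a * a * a by rewrite !exprS expr0 mulr1 mulrA.
have e2a : a^+2 = a * a by rewrite expr2.
rewrite e2a in hz1 hz3; rewrite e3a in hz0 hz2.
have E1 : (1 / s < a) = (1 < a * s) by rewrite ltr_pdivrMr.
have E2 : (a < (r - 5) / 10) = (a * 10 < r - 5) by rewrite ltr_pdivlMr.
rewrite E1 E2.
split.
- case=> p0 p1 p2 p3.
  have a0 : 0 < a by nra.
  have h1 : 0 < 1 - a * a by nra.
  have h5 : 1 < 5 * (a * a) by nra.
  have h4 : 0 < 4 - 5 * a - 5 * (a * a) by nra.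
  apply/andP; split; nra.
- case/andP=> q1 q2.
  have a0 : 0 < a by nra.
  have h1 : 0 < 1 - a * a by nra.
  have h5 : 1 < 5 * (a * a) by nra.
  have h4 : 0 < 4 - 5 * a - 5 * (a * a) by nra.
  split; nra.
Qed.

Local Close Scope ring_scope.

Theorem lemma4p3 (a : R) (ha : (-1 <= a < 1)%R) :
  M3 \in unitmx /\
  forall z : 'cV[R]_4, (M3 *m z)%R = va3 a ->
    ((forall i : 'I_4, (0 < z i ord0)%R) <->
     (1 / sqrt 5 < a < (sqrt 105 - 5) / 10)%R).
Proof.
split; first exact: M3_unit.
move=> z /eqs [e0 e1 e2 e3].
have [hs hs2] := sqrt_facts 5.
have [hr hr2] := sqrt_facts 105.
have f5 : IZR 5 = (5%:R)%R :> R by rewrite IZRposE INRE.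
have f105 : IZR 105 = (105%:R)%R :> R by rewrite IZRposE INRE.
have hs2' : (sqrt (IZR 5) * sqrt (IZR 5))%R = (5%:R)%R by rewrite hs2 f5.
have hr2' : (sqrt (IZR 105) * sqrt (IZR 105))%R = (105%:R)%R by rewrite hr2 f105.
rewrite -(@key a _ _ _ _ _ _ ha hs hs2' hr hr2' e0 e1 e2 e3).
split.
  by move=> h; split; apply: h.
case=> p0 p1 p2 p3 [[|[|[|[|k]]]] Hk] //.
- by have -> : Ordinal Hk = inord 0 by apply/val_inj; rewrite /= inordK.
- by have -> : Ordinal Hk = inord 1 by apply/val_inj; rewrite /= inordK.
- by have -> : Ordinal Hk = inord 2 by apply/val_inj; rewrite /= inordK.
- by have -> : Ordinal Hk = inord 3 by apply/val_inj; rewrite /= inordK.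
Qed.
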